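(* Let $n\ge 1$ and $d\ge 0$. Consider the set $\mathcal B_{n,d}$ of all directed multigraphs with output pair $H=(V,E,(a,b))$, taken up to isomorphism, such that $|V|\le \min\{n,2+2d\}$, $|E|\le d$, and no node of $V\setminus\{a,b\}$ is isolated. Then $\{P_H : H\in\mathcal B_{n,d}\}$ is a basis of the real vector space of all $S_n$-equivariant polynomial maps $P:\mathbb R^{n\times n}\to\mathbb R^{n\times n}$ of degree at most $d$.
   Context: A directed multigraph with output pair is $H=(V,E,(a,b))$ with $V=[m]=\{1,\dots,m\}$, $E$ a finite multiset of ordered pairs $(r,s)\in V\times V$ (parallel edges and self-loops allowed), and $a,b\in V$ a distinguished, not necessarily distinct, pair called the red edge (it is not an element of $E$). A node is isolated if no edge of $E$ is incident to it. Two such multigraphs are isomorphic if there is a bijection of node sets carrying the edge multiset onto the edge multiset (with multiplicities) and the red pair $(a,b)$ onto the red pair. For $X\in\mathbb R^{n\times n}$, $P_H(X)\in\mathbb R^{n\times n}$ is defined by $P_H(X)_{i_a,i_b}=\sum_{j\in[n]^m,\ j_a=i_a,\ j_b=i_b}\ \prod_{(r,s)\in E}X_{j_r,j_s}$ (product over $E$ with multiplicity; empty product $=1$); if $a=b$ this formula defines the diagonal entries and all off-diagonal entries of $P_H(X)$ are $0$. The symmetric group $S_n$ acts on $\mathbb R^{n\times n}$ by $(g\cdot X)_{ij}=X_{g^{-1}(i),g^{-1}(j)}$. A polynomial map $P:\mathbb R^{n\times n}\to\mathbb R^{n\times n}$ (each entry a polynomial in the entries of $X$) is equivariant if $P(g\cdot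 X)=g\cdot P(X)$ for all $g\in S_n$ and all $X$. *)

(* Defs.v *)
From HB Require Import structures.
From mathcomp Require Import all_boot all_order all_algebra all_fingroup.
From mathcomp Require Import reals.
Set Implicit Arguments. Unset Strict Implicit. Unset Printing Implicit Defensive.
Import Order.TTheory GRing.Theory Num.Theory.
Local Open Scope ring_scope.

(* A directed multigraph with output pair: nodes 'I_m (i.e. {0,...,m-1}),
   edge multiset represented by a list (order irrelevant, multiplicity kept),
   red pair (a, b). *)
Record mgraph := MGraph {
  mg_m : nat;
  mg_E : seq ('I_mg_m * 'I_mg_m);
  mg_a : 'I_mg_m;
  mg_b : 'I_mg_m }.

Definition mg_iso (H1 H2 : mgraph) : Prop :=
  exists f : 'I_(mg_m H1) -> 'I_(mg_m H2),
    [/\ bijective f,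
        perm_eq [seq (f e.1, f e.2) | e <- mg_E H1] (mg_E H2),
        f (mg_a H1) = mg_a H2 &
        f (mg_b H1) = mg_b H2].

Definition mg_isolated (H : mgraph) (v : 'I_(mg_m H)) : bool :=
  ~~ has (fun e => (e.1 == v) || (e.2 == v)) (mg_E H).

(* Membership in B_{n,d} (before quotienting by isomorphism). *)
Definition inB (n d : nat) (H : mgraph) : Prop :=
  [/\ (mg_m H <= minn n (2 + 2 * d))%N,
      (size (mg_E H) <= d)%N &
      forall v : 'I_(mg_m H), v != mg_a H -> v != mg_b H -> ~~ mg_isolated v].

(* P_H(X)_{i,k} = sum over j : V -> [n] with j a = i, j b = k of
   prod_{(r,s) in E} X_{j r, j s}.  When a = b and i <> k the sum is empty,
   so off-diagonal entries are 0, as in the definition. *)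
Definition PH (R : realType) (n : nat) (H : mgraph) (X : 'M[R]_n) : 'M[R]_n :=
  \matrix_(i < n, k < n)
    \sum_(phi : {ffun 'I_(mg_m H) -> 'I_n} |
            (phi (mg_a H) == i) && (phi (mg_b H) == k))
      \prod_(e <- mg_E H) X (phi e.1) (phi e.2).

Definition Sact (R : realType) (n : nat) (g : 'S_n) (X : 'M[R]_n) : 'M[R]_n :=
  \matrix_(i < n, j < n) X ((g^-1)%g i) ((g^-1)%g j).

Definition equivariant (R : realType) (n : nat) (P : 'M[R]_n -> 'M[R]_n) : Prop :=
  forall (g : 'S_n) (X : 'M[R]_n), P (Sact g X) = Sact g (P X).

Definition monomial (R : realType) (n : nat)
    (alpha : {ffun 'I_n * 'I_n -> nat}) (X : 'M[R]_n) : R :=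
  \prod_(ij : 'I_n * 'I_n) X ij.1 ij.2 ^+ alpha ij.

Definition mdeg (n : nat) (alpha : {ffun 'I_n * 'I_n -> nat}) : nat :=
  (\sum_(ij : 'I_n * 'I_n) alpha ij)%N.

Definition poly_fun_deg_le (R : realType) (n d : nat) (f : 'M[R]_n -> R) : Prop :=
  exists s : seq (R * {ffun 'I_n * 'I_n -> nat}),
    all (fun p => (mdeg p.2 <= d)%N) s /\
    forall X, f X = \sum_(p <- s) p.1 * monomial p.2 X.

Definition polymap_deg_le (R : realType) (n d : nat) (P : 'M[R]_n -> 'M[R]_n) : Prop :=
  forall i j : 'I_n, poly_fun_deg_le d (fun X => P X i j).

(* Main.v *)
Require Import Defs.
From HB Require Import structures.
From mathcomp Require Import all_boot all_order all_algebra all_fingroup.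
From mathcomp Require Import reals.
From mathcomp Require Import zify.
Import Order.TTheory GRing.Theory Num.Theory.
Local Open Scope ring_scope.

Module Part1.
Set Implicit Arguments. Unset Strict Implicit. Unset Printing Implicit Defensive.

Section Main.
Variable R : realType.
Variable n : nat.
Local Notation N := 'I_n.

Definition pcnt m (phi : 'I_m -> N) (E : seq ('I_m * 'I_m)) : {ffun N * N -> nat} :=
  [ffun ij => count (pred1 ij) [seq (phi e.1, phi e.2) | e <- E]].

Lemma prod_monomial m (phi : 'I_m -> N) (E : seq ('I_m * 'I_m)) (X : 'M[R]_n) :
  \prod_(e <- E) X (phi e.1) (phi e.2) = monomial (pcnt phi E) X.
Proof.
rewrite /monomial; elim: E => [|e E IH].
  rewrite big_nil; symmetry; apply: big1 => ij _; by rewrite ffunE.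
rewrite big_cons IH.
rewrite [RHS](bigD1 (phi e.1, phi e.2)) //= [in RHS]ffunE /= eqxx add1n exprS -mulrA.
rewrite [in LHS](bigD1 (phi e.1, phi e.2)) //= ffunE; congr (_ * (_ * _)).
apply: eq_bigr => ij hij; rewrite !ffunE /= eq_sym (negbTE hij) //.
Qed.

Lemma mdeg_pcnt m (phi : 'I_m -> N) (E : seq ('I_m * 'I_m)) :
  mdeg (pcnt phi E) = size E.
Proof.
rewrite /mdeg; elim: E => [|e E IH].
  by apply: big1 => ij _; rewrite ffunE.
under eq_bigr do rewrite ffunE /=.
rewrite big_split /= -IH.
rewrite (bigD1 (phi e.1, phi e.2)) //= eqxx big1 /=; last first.
  by move=> ij hij; rewrite eq_sym (negbTE hij).
by rewrite add1n; congr (_.+1); apply: eq_bigr => ij _; rewrite ffunE.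
Qed.

Lemma PH_poly d (H : mgraph) : (size (mg_E H) <= d)%N -> polymap_deg_le d (@PH R n H).
Proof.
move=> hd i j.
exists [seq (1, pcnt phi (mg_E H)) | phi : {ffun 'I_(mg_m H) -> N} <- enum [pred phi : {ffun 'I_(mg_m H) -> N} |
          (phi (mg_a H) == i) && (phi (mg_b H) == j)]].
split.
  by apply/allP => p /mapP [phi _ ->] /=; rewrite mdeg_pcnt.
move=> X; rewrite /PH mxE big_map big_enum_cond /=.
by apply: eq_big => [phi|phi _]; rewrite ?andbT // mul1r prod_monomial.
Qed.

Lemma PH_equiv (H : mgraph) : equivariant (@PH R n H).
Proof.
move=> g X; apply/matrixP => i k; rewrite /Sact /PH !mxE.
rewrite (reindex_onto (fun psi : {ffun 'I_(mg_m H) -> N} => [ffun x => g (psi x)])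
                      (fun phi => [ffun x => (g^-1)%g (phi x)])).
  apply: eq_big => [psi|psi _].
    rewrite !ffunE !(canF_eq (permK g)).
    have -> : [ffun x => (g^-1)%g ([ffun x0 => g (psi x0)] x)] == psi.
      by apply/eqP/ffunP => x; rewrite !ffunE permK.
    by rewrite andbT.
  by apply: eq_bigr => e _; rewrite !ffunE !mxE !permK.
by move=> phi _; apply/ffunP => x; rewrite !ffunE permKV.
Qed.
End Main.

End Part1.

Module Part2.
Local Close Scope ring_scope.
Set Implicit Arguments. Unset Strict Implicit. Unset Printing Implicit Defensive.

Lemma baseK_uniq K N (a b : 'I_N -> nat) : 0 < K ->
  (forall o, a o < K) -> (forall o, b o < K) ->
  \sum_(o < N) a o * K ^ o = \sum_(o < N) b o * K ^ o -> a =1 b.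
Proof.
move=> K0; elim: N a b => [|N IH] a b ha hb heq o; first by case: o.
move: heq; rewrite !big_ord_recl /= !expn0 !muln1.
have sh : forall f : 'I_N.+1 -> nat,
  \sum_(i < N) f (lift ord0 i) * K ^ (lift ord0 i) = K * \sum_(i < N) f (lift ord0 i) * K ^ i.
  move=> f; rewrite big_distrr /=; apply: eq_bigr => i _.
  by rewrite /= /bump /= add1n expnS mulnCA.
rewrite !sh => heq.
have h0 : a ord0 = b ord0.
  have := congr1 (modn^~ K) heq.
  by rewrite (addnC (a ord0)) (addnC (b ord0)) ![K * _]mulnC !modnMDl !modn_small.
have h1 : \sum_(i < N) a (lift ord0 i) * K ^ i = \sum_(i < N) b (lift ord0 i) * K ^ i.
  move: heq; rewrite h0 => /addnI /eqP; rewrite eqn_mul2l eqn0Ngt K0 /= => /eqP //.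
have := IH (fun i => a (lift ord0 i)) (fun i => b (lift ord0 i)) (fun i => ha _) (fun i => hb _) h1.
case: (unliftP ord0 o) => [j ->|->] //.
Qed.

Lemma sum_rank (A : Type) (T : finType) K (f : A -> T) (E : seq A) :
  \sum_(e <- E) K ^ enum_rank (f e) =
  \sum_(o < #|{: T}|) count (pred1 (enum_val o)) (map f E) * K ^ o.
Proof.
elim: E => [|e E IH]; first by rewrite big_nil big1.
rewrite big_cons IH /=.
under [RHS]eq_bigr do rewrite mulnDl.
rewrite big_split /=; congr (_ + _).
rewrite (bigD1 (enum_rank (f e))) //= enum_rankK eqxx mul1n big1 ?addn0 //.
move=> o ho; case: eqP => [he|]; last by rewrite mul0n.
by move: ho; rewrite he enum_valK eqxx.
Qed.

Lemma sum_rank_perm (A B : Type) (T : finType) K (f : A -> T) (g : B -> T)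
   (E1 : seq A) (E2 : seq B) : size E1 < K -> size E2 < K ->
  \sum_(e <- E1) K ^ enum_rank (f e) = \sum_(e <- E2) K ^ enum_rank (g e) ->
  perm_eq (map f E1) (map g E2).
Proof.
move=> h1 h2; rewrite !sum_rank => /baseK_uniq h.
have K0 : 0 < K by apply: leq_ltn_trans h1.
have {}h := h K0.
have H : forall x, count (pred1 x) (map f E1) = count (pred1 x) (map g E2).
  move=> x; rewrite -(enum_rankK x); apply: h => o.
    by apply: leq_ltn_trans (count_size _ _) _; rewrite size_map.
  by apply: leq_ltn_trans (count_size _ _) _; rewrite size_map.
by apply/allP => x _; apply/eqP; apply: H.
Qed.

Section Iso.
Variable n : nat.

Lemma widen_inj m (hm : m <= n) : injective (widen_ord hm).
Proof. by move=> x y /(congr1 val) /= /val_inj. Qed.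

Lemma match_iso (H Hs : mgraph) (hm : mg_m Hs <= n) (phi : 'I_(mg_m H) -> 'I_n) :
  (forall v : 'I_(mg_m Hs), v != mg_a Hs -> v != mg_b Hs -> ~~ mg_isolated v) ->
  phi (mg_a H) = widen_ord hm (mg_a Hs) -> phi (mg_b H) = widen_ord hm (mg_b Hs) ->
  perm_eq [seq (phi e.1, phi e.2) | e <- mg_E H]
          [seq (widen_ord hm e.1, widen_ord hm e.2) | e <- mg_E Hs] ->
  mg_m Hs <= mg_m H /\ (mg_m H <= mg_m Hs -> mg_iso H Hs).
Proof.
move=> hiso ha hb hp.
set w := widen_ord hm in ha hb hp *.
have cov : forall v, w v \in codom phi.
  move=> v; case: (eqVneq v (mg_a Hs)) => [->|na]; first by rewrite -ha codom_f.
  case: (eqVneq v (mg_b Hs)) => [->|nb]; first by rewrite -hb codom_f.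
  have := hiso v na nb; rewrite /mg_isolated negbK => /hasP [e he /orP hev].
  have : (w e.1, w e.2) \in [seq (phi e.1, phi e.2) | e <- mg_E H].
    by rewrite (perm_mem hp); apply/mapP; exists e.
  case/mapP => e' _ [h1 h2].
  by case: hev => /eqP <-; rewrite ?h1 ?h2 codom_f.
have sub : [set x in codom w] \subset [set x in codom phi].
  by apply/subsetP => x; rewrite !inE => /codomP [v ->].
have cA : #|[set x in codom w]| = mg_m Hs.
  by rewrite cardsE card_codom ?card_ord //; apply: widen_inj.
have cB : #|[set x in codom phi]| <= mg_m H.
  by rewrite cardsE -{2}(card_ord (mg_m H)) -(size_codom phi) card_size.
have le1 : mg_m Hs <= mg_m H by rewrite -cA; apply: leq_trans (subset_leq_card sub) cB.
split => // le2.
have eqm : mg_m H = mg_m Hs by apply/eqP; rewrite eqn_leq le1 le2.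
have cB' : #|[set x in codom phi]| = mg_m Hs.
  apply/eqP; rewrite eqn_leq -{1}eqm cB -{1}cA subset_leq_card //.
have AB : [set x in codom w] =i [set x in codom phi].
  by apply/subset_cardP => //; rewrite cA cB'.
have injphi : injective phi.
  apply/injectiveP; rewrite /injectiveb /dinjectiveb; apply/card_uniqP.
  rewrite size_map -cardE card_ord; change (#|codom phi| = mg_m H).
  by rewrite -cardsE cB' eqm.
pose f (x : 'I_(mg_m H)) : 'I_(mg_m Hs) := insubd (mg_a Hs) (val (phi x)).
have hf : forall x, w (f x) = phi x.
  move=> x; have : phi x \in [set x in codom w] by rewrite AB inE codom_f.
  rewrite inE => /codomP [v hv]; apply: val_inj => /=.
  by rewrite /f insubdK // hv; rewrite unfold_in /=; apply: ltn_ord.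
have injf : injective f.
  by move=> x y hxy; apply: injphi; rewrite -!hf hxy.
exists f; split.
- by apply: inj_card_bij => //; rewrite !card_ord eqm.
- apply: (@perm_map_inj _ _ (fun p => (w p.1, w p.2))).
    by move=> [x1 x2] [y1 y2] /= [/val_inj -> /val_inj ->].
  rewrite -map_comp; apply: etrans hp; congr perm_eq; apply: eq_map => e /=; by rewrite !hf.
- by have := hf (mg_a H); rewrite ha => /(congr1 val) /= /val_inj.
- by have := hf (mg_b H); rewrite hb => /(congr1 val) /= /val_inj.
Qed.
End Iso.

Local Open Scope ring_scope.
Section Indep.
Variable R : realType.
Variable n d : nat.
Local Notation N := 'I_n.

Lemma poly_zero_all (p : {poly R}) : (forall t, p.[t] = 0) -> p = 0.
Proof.
move=> hp; apply/eqP/negPn/negP => hp0.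
have := max_poly_roots hp0 (rs := [seq i%:R | i <- iota 0 (size p)]).
rewrite size_map size_iota ltnn => h; suff : false by []; apply: h.
  by apply/allP => x /mapP [i _ ->]; apply/rootP.
rewrite map_inj_uniq ?iota_uniq //.
by move=> a b /eqP; rewrite eqr_nat => /eqP.
Qed.

Lemma prod_exp (A : Type) (t : R) (s : seq A) (f : A -> nat) :
  \prod_(e <- s) t ^+ f e = t ^+ (\sum_(e <- s) f e)%N.
Proof.
elim: s => [|e s IH]; first by rewrite !big_nil.
by rewrite !big_cons IH exprD.
Qed.

Lemma indep k (Hs : 'I_k -> mgraph) (c : 'I_k -> R) :
  (forall i, inB n d (Hs i)) -> (forall i j, i != j -> ~ mg_iso (Hs i) (Hs j)) ->
  (forall X : 'M[R]_n, \sum_(i < k) c i *: PH (Hs i) X = 0) -> forall i, c i = 0.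
Proof.
move=> hB hiso hsum i0; apply/eqP/negPn/negP => hc0.
case: (@arg_maxnP _ i0 (fun j => c j != 0) (fun j => mg_m (Hs j)) hc0) => ist hcst hmax.
have [hm1 hE1 hni1] := hB ist.
have hmn : (mg_m (Hs ist) <= n)%N by apply: leq_trans hm1 (geq_minl _ _).
pose w := widen_ord hmn.
pose K := d.+1.
pose Xt (t : R) : 'M[R]_n := \matrix_(u, v) t ^+ (K ^ enum_rank (u, v)).
pose ii := w (mg_a (Hs ist)).
pose kk := w (mg_b (Hs ist)).
pose key j (phi : 'I_(mg_m (Hs j)) -> N) :=
  (\sum_(e <- mg_E (Hs j)) K ^ enum_rank (phi e.1, phi e.2))%N.
pose p : {poly R} := \sum_(j < k) c j *: \sum_(phi : {ffun 'I_(mg_m (Hs j)) -> N} |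
     (phi (mg_a (Hs j)) == ii) && (phi (mg_b (Hs j)) == kk)) 'X^(key j phi).
have p0 : p = 0.
  apply: poly_zero_all => t.
  have := congr1 (fun M : 'M[R]_n => M ii kk) (hsum (Xt t)).
  rewrite summxE mxE /= => <-.
  rewrite horner_sum; apply: eq_bigr => j _.
  rewrite hornerZ !mxE horner_sum; congr (_ * _); apply: eq_bigr => phi _.
  rewrite hornerXn -prod_exp; apply: eq_bigr => e _; by rewrite mxE.
have := congr1 (fun q : {poly R} => q`_(key ist w)) p0.
rewrite coef0 coef_sum /=.
rewrite (bigD1 ist) //= [X in _ + X]big1 ?addr0; last first.
  move=> j hj; rewrite coefZ coef_sum.
  case: (eqVneq (c j) 0) => [->|cj]; first by rewrite mul0r.
  rewrite big1 ?mulr0 // => phi /andP [/eqP ha /eqP hb].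
  rewrite coefXn; case: eqP => [heq|]; last by [].
  exfalso.
  have [hmj hEj hnij] := hB j.
  have hpe := @sum_rank_perm _ _ _ K (fun e => (phi e.1, phi e.2)) (fun e => (w e.1, w e.2))
    (mg_E (Hs j)) (mg_E (Hs ist)) (leq_ltn_trans hEj (ltnSn _)) (leq_ltn_trans hE1 (ltnSn _))
    (esym heq).
  have [_ hi] := @match_iso n (Hs j) (Hs ist) hmn phi hni1 ha hb hpe.
  by apply: (hiso j ist hj); apply: hi; apply: hmax.
rewrite coefZ coef_sum => /eqP; rewrite mulf_eq0 (negbTE hcst) /= => /eqP hS.
pose phi0 : {ffun 'I_(mg_m (Hs ist)) -> N} := [ffun x => w x].
move: hS; rewrite (bigD1 phi0) /=; last by rewrite !ffunE !eqxx.
rewrite coefXn.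
have -> : key ist w == key ist phi0.
  by apply/eqP; apply: eq_bigr => e _; rewrite !ffunE.
move/eqP; rewrite paddr_eq0 ?ler01 ?oner_eq0 //.
by apply: sumr_ge0 => i _; rewrite coefXn ler0n.
Qed.
End Indep.

End Part2.

Module Part3.
Local Close Scope ring_scope.
Set Implicit Arguments. Unset Strict Implicit. Unset Printing Implicit Defensive.

Lemma collapse_lt m (u v x : 'I_m) : u != v -> unbump v (if x == v then u else x) < m.-1.
Proof.
move=> huv; set y := (if x == v then u else x).
have yv : (y : nat) != v by rewrite /y; case: (eqVneq x v) => // _.
have ym : y < m by apply: ltn_ord.
have vm : v < m by apply: ltn_ord.
rewrite /unbump; case hvy: (v < y); move: hvy yv ym vm; lia.
Qed.

Definition collapse m (u v : 'I_m) (huv : u != v) (x : 'I_m) : 'I_m.-1 :=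
  Ordinal (collapse_lt x huv).

Lemma lift_collapse m (u v : 'I_m) (huv : u != v) x :
  lift v (collapse huv x) = if x == v then u else x.
Proof.
apply: val_inj => /=; rewrite /bump /unbump.
set y := (if x == v then u else x).
have yv : (y : nat) != v by rewrite /y; case: (eqVneq x v) => // _.
case hvy: (v < y); case hvy2: (v <= y - (v < y)); move: hvy hvy2 yv; lia.
Qed.

Lemma collapse_lift m (u v : 'I_m) (huv : u != v) y :
  collapse huv (lift v y) = y.
Proof.
apply: val_inj => /=; rewrite eq_sym (negbTE (neq_lift v y)) /=.
exact: bumpK.
Qed.

Definition imG (H : mgraph) m' (g : 'I_(mg_m H) -> 'I_m') : mgraph :=
  @MGraph m' [seq (g e.1, g e.2) | e <- mg_E H] (g (mg_a H)) (g (mg_b H)).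

Local Open Scope ring_scope.
Section Span.
Variable R : realType.
Variables n d : nat.
Local Notation N := 'I_n.
Local Notation M := ('M[R]_n).

Definition Wt (H : mgraph) (X : M) (phi : 'I_(mg_m H) -> N) : R :=
  \prod_(e <- mg_E H) X (phi e.1) (phi e.2).

Definition cnd m (phi : 'I_m -> N) (T : {set 'I_m * 'I_m}) : bool :=
  [forall p in T, phi p.1 != phi p.2].

Definition DH (H : mgraph) (T : {set 'I_(mg_m H) * 'I_(mg_m H)}) (X : M) : M :=
  \matrix_(i, k) \sum_(phi : {ffun 'I_(mg_m H) -> N} |
      (phi (mg_a H) == i) && (phi (mg_b H) == k) && cnd phi T) Wt X phi.

Definition offd m : {set 'I_m * 'I_m} := [set p | p.1 != p.2].

Definition Inj (H : mgraph) (X : M) : M := DH (offd (mg_m H)) X.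

Definition inS (F : M -> M) : Prop :=
  exists k (Hs : 'I_k -> mgraph) (c : 'I_k -> R),
    (forall i, inB n d (Hs i)) /\ forall X, F X = \sum_(i < k) c i *: PH (Hs i) X.

Lemma inS_ext F G : (forall X, F X = G X) -> inS F -> inS G.
Proof. by move=> e [k [Hs [c [h1 h2]]]]; exists k, Hs, c; split => // X; rewrite -e. Qed.

Lemma inS0 : inS (fun _ => 0).
Proof.
exists 0%N, (fun _ => @MGraph 1 [::] ord0 ord0), (fun _ => 0).
by split => [[]|X]; rewrite ?big_ord0.
Qed.

Lemma inSD F G : inS F -> inS G -> inS (fun X => F X + G X).
Proof.
move=> [k1 [H1 [c1 [h1 e1]]]] [k2 [H2 [c2 [h2 e2]]]].
exists (k1 + k2)%N, (fun i => match split i with inl j => H1 j | inr j => H2 j end),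
  (fun i => match split i with inl j => c1 j | inr j => c2 j end).
split => [i|X]; first by case: (split i).
rewrite big_split_ord /= e1 e2; congr (_ + _); apply: eq_bigr => i _.
  by have -> : split (lshift k2 i) = inl i by exact: (unsplitK (inl i : 'I_k1 + 'I_k2)).
by have -> : split (rshift k1 i) = inr i by exact: (unsplitK (inr i : 'I_k1 + 'I_k2)).
Qed.

Lemma inSZ a F : inS F -> inS (fun X => a *: F X).
Proof.
move=> [k [Hs [c [h e]]]]; exists k, Hs, (fun i => a * c i); split => // X.
by rewrite e scaler_sumr; apply: eq_bigr => i _; rewrite scalerA.
Qed.

Lemma inSB F G : inS F -> inS G -> inS (fun X => F X - G X).
Proof.
move=> hF hG; apply: (inS_ext _ (inSD hF (inSZ (-1) hG))) => X.
by rewrite scaleN1r.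
Qed.

Lemma inS_PH H : inB n d H -> inS (PH (R:=R) H).
Proof.
move=> hB; exists 1%N, (fun _ => H), (fun _ => 1); split => // X.
by rewrite big_ord1 scale1r.
Qed.

Lemma inS_sum (I : Type) (r : seq I) (F : I -> M -> M) :
  (forall i, inS (F i)) -> inS (fun X => \sum_(i <- r) F i X).
Proof.
move=> hF; elim: r => [|i r IH].
  by apply: inS_ext inS0 => X; rewrite big_nil.
by apply: inS_ext (inSD (hF i) IH) => X; rewrite big_cons.
Qed.


Lemma PH_DH H X : PH H X = DH (set0 : {set 'I_(mg_m H) * 'I_(mg_m H)}) X.
Proof.
apply/matrixP => i k; rewrite !mxE; apply: eq_bigl => phi.
suff -> : cnd phi set0 by rewrite andbT.
by apply/forallP => p; rewrite in_set0.
Qed.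

Lemma cndU1 m (phi : 'I_m -> N) q T :
  cnd phi (q |: T) = (phi q.1 != phi q.2) && cnd phi T.
Proof.
apply/forallP/andP => [h|[h1 /forallP h2] p].
  split; first by have := h q; rewrite setU11.
  by apply/forallP => p; apply/implyP => hp; have := h p; rewrite in_setU1 hp orbT.
by rewrite in_setU1; case: eqP => [->|_] //=; apply: h2.
Qed.

Lemma cnd_img m m' (g : 'I_m -> 'I_m') (psi : 'I_m' -> N) T :
  cnd (fun x => psi (g x)) T = cnd psi [set (g q.1, g q.2) | q in T].
Proof.
apply/forallP/forallP => h p.
  apply/implyP => /imsetP [q hq ->] /=; by have := h q; rewrite hq.
apply/implyP => hp; have := h (g p.1, g p.2).
by rewrite (imset_f (fun q => (g q.1, g q.2)) hp).
Qed.

Lemma cnd_ffun m (f : 'I_m -> N) T : cnd [ffun x => f x] T = cnd f T.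
Proof. by apply: eq_forallb => q; rewrite !ffunE. Qed.

Lemma DH_split H (u v : 'I_(mg_m H)) (huv : u != v) T X :
  DH T X = DH ((u, v) |: T) X +
           DH (H := imG (collapse huv)) [set (collapse huv q.1, collapse huv q.2) | q in T] X.
Proof.
apply/matrixP => i k; rewrite !mxE.
rewrite (bigID (fun phi : {ffun _} => phi u == phi v)) /= addrC; congr (_ + _).
  by apply: eq_bigl => phi; rewrite cndU1 /=; case: (phi u == phi v); rewrite ?andbF ?andbT.
set g := collapse huv.
rewrite (reindex_onto (fun psi : {ffun 'I_(mg_m H).-1 -> N} => [ffun x => psi (g x)])
                      (fun phi => [ffun y => phi (lift v y)])).
  apply: eq_big => [psi|psi _].
    rewrite !ffunE.
    have -> : [ffun y => [ffun x => psi (g x)] (lift v y)] == psi.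
      by apply/eqP/ffunP => y; rewrite !ffunE /g collapse_lift.
    have -> : g u = g v.
      by apply: (@lift_inj _ v); rewrite !lift_collapse eqxx (negbTE huv).
    by rewrite eqxx !andbT cnd_ffun cnd_img.
  rewrite /Wt big_map; apply: eq_bigr => e _; by rewrite !ffunE.
move=> phi /andP [_ /eqP huv']; apply/ffunP => x; rewrite !ffunE lift_collapse.
by case: eqP => [->|].
Qed.

Lemma cnd_offd m (phi : 'I_m -> N) : cnd phi (offd m) = injectiveb phi.
Proof.
apply/forallP/injectiveP => [h x y hxy|h p].
  apply/eqP/negPn/negP => nxy; have := h (x, y); rewrite inE /= nxy hxy eqxx //.
rewrite inE; apply/implyP; apply: contra => /eqP; by move/h => ->.
Qed.

Lemma Inj_big H X : (n < mg_m H)%N -> Inj H X = 0.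
Proof.
move=> hn; apply/matrixP => i k; rewrite !mxE big1 // => phi /andP [_].
rewrite cnd_offd => /injectiveP /leq_card; rewrite !card_ord => h.
by move: hn; rewrite ltnNge h.
Qed.

Lemma Inj_remove H (w : 'I_(mg_m H)) (haw : mg_a H != w) (hbw : mg_b H != w) X :
  mg_isolated w ->
  Inj H X = (n - (mg_m H).-1)%:R *: Inj (imG (collapse haw)) X.
Proof.
move=> hiso; apply/matrixP => i k; rewrite !mxE.
set g := collapse haw.
have hE : forall e, e \in mg_E H -> (e.1 != w) && (e.2 != w).
  move=> e he; move/hasPn: hiso => /(_ e he); by rewrite negb_or.
have gK : forall z, z != w -> lift w (g z) = z.
  by move=> z hz; rewrite /g lift_collapse (negbTE hz).
rewrite (partition_big (fun phi : {ffun 'I_(mg_m H) -> N} =>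
            ([ffun y => phi (lift w y)] : {ffun 'I_(mg_m H).-1 -> N}))
          (fun psi => (psi (g (mg_a H)) == i) && (psi (g (mg_b H)) == k) &&
                      cnd psi (offd (mg_m H).-1))) /=; last first.
  move=> phi /andP [/andP [ha hb]]; rewrite !ffunE !gK // ha hb /= !cnd_offd.
  move/injectiveP => hinj; apply/injectiveP => y1 y2; rewrite !ffunE.
  by move/hinj/lift_inj.
rewrite mulr_sumr; apply: eq_bigr => psi /andP [/andP [hpa hpb]].
rewrite cnd_offd => /injectiveP psiinj.
rewrite (eq_bigr (fun _ => Wt (H := imG g) X psi)); last first.
  move=> phi /andP [_ /eqP hpsi]; rewrite /Wt big_map big_seq_cond [RHS]big_seq_cond.
  apply: eq_bigr => e /andP [he _]; rewrite -hpsi !ffunE.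
  by case/andP: (hE e he) => h1 h2; rewrite !gK.
rewrite sumr_const mulr_natl; congr (_ *+ _).
pose ext (x : N) : {ffun 'I_(mg_m H) -> N} := [ffun z => if z == w then x else psi (g z)].
have extinj : injective ext.
  by move=> x y /(congr1 (fun f : {ffun _} => f w)); rewrite !ffunE eqxx.
have -> : #|[pred phi : {ffun 'I_(mg_m H) -> N} | (phi (mg_a H) == i) && (phi (mg_b H) == k) &&
    cnd phi (offd (mg_m H)) && ([ffun y => phi (lift w y)] == psi)]|
   = #|ext @: ~: [set y in codom psi]|.
  apply: eq_card => phi; rewrite inE /=; apply/idP/idP.
    case/andP => /andP [/andP [ha hb]]; rewrite cnd_offd => /injectiveP phiinj /eqP hpsi.
    apply/imsetP; exists (phi w).
      rewrite !inE; apply/codomP => [[y hy]]; move: hy; rewrite -hpsi ffunE.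
      by move/phiinj => hw; move: (neq_lift w y); rewrite -hw eqxx.
    apply/ffunP => z; rewrite ffunE; case: eqP => [->//|/eqP hz].
    by rewrite -hpsi ffunE gK.
  case/imsetP => x; rewrite !inE => hx ->.
  have hext : forall z, z != w -> ext x z = psi (g z).
    by move=> z hz; rewrite ffunE (negbTE hz).
  rewrite !hext //.
  apply/andP; split; last first.
    apply/eqP/ffunP => y; rewrite !ffunE eq_sym (negbTE (neq_lift w y)).
    by rewrite /g collapse_lift.
  apply/andP; split; first by apply/andP; split; [exact: hpa|exact: hpb].
    rewrite cnd_offd; apply/injectiveP => z1 z2.
    rewrite !ffunE; case: (eqVneq z1 w) => [->|h1]; case: (eqVneq z2 w) => [->|h2] //.
    - by move=> hxe; move: hx; rewrite hxe codom_f.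
    - by move=> hxe; move: hx; rewrite -hxe codom_f.
    - by move/psiinj => hg; rewrite -(gK _ h1) -(gK _ h2) hg.
rewrite card_imset //.
have h := cardsC [set y in codom psi].
have h2 : #|[set y in codom psi]| = (mg_m H).-1.
  by rewrite cardsE card_codom // card_ord.
have hle : ((mg_m H).-1 <= n)%N by have := @leq_card _ _ psi psiinj; rewrite !card_ord.
apply: (@addnI #|[set y in codom psi]|); rewrite h h2 card_ord subnKC //.
Qed.

Lemma nodes_bound (H : mgraph) :
  (forall v, v != mg_a H -> v != mg_b H -> ~~ mg_isolated v) ->
  (mg_m H <= 2 + 2 * size (mg_E H))%N.
Proof.
move=> hni.
set L := [seq e.1 | e <- mg_E H] ++ [seq e.2 | e <- mg_E H].
have sub : [set: 'I_(mg_m H)] \subset [set mg_a H; mg_b H] :|: [set x in L].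
  apply/subsetP => v _; rewrite !inE.
  case: (eqVneq v (mg_a H)) => //= h1; case: (eqVneq v (mg_b H)) => //= h2.
  have := hni v h1 h2; rewrite /mg_isolated negbK => /hasP [e he /orP [] /eqP <-].
    by rewrite mem_cat map_f.
  by rewrite mem_cat map_f ?orbT.
have := subset_leq_card sub; rewrite cardsT card_ord => h.
apply: leq_trans h _; rewrite cardsU.
have c1 := cards2 (mg_a H) (mg_b H).
have c2 : (#|[set x in L]| <= 2 * size (mg_E H))%N.
  by rewrite cardsE; apply: leq_trans (card_size _) _; rewrite size_cat !size_map mul2n addnn.
have c3 : ((mg_a H != mg_b H).+1 <= 2)%N by case: (_ != _).
apply: leq_trans (leq_subr _ _) _; rewrite c1; exact: leq_add c3 c2.
Qed.

Lemma main_ind m : forall H : mgraph, mg_m H = m -> (size (mg_E H) <= d)%N ->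
  inS (Inj H) /\ (forall T : {set 'I_(mg_m H) * 'I_(mg_m H)}, T \subset offd (mg_m H) -> inS (fun X => DH T X)).
Proof.
elim/ltn_ind: m => m IH H hm hd.
have IHs : forall H' : mgraph, (mg_m H' < m)%N -> (size (mg_E H') <= d)%N ->
    inS (Inj H') /\ (forall T : {set 'I_(mg_m H') * 'I_(mg_m H')}, T \subset offd (mg_m H') -> inS (fun X => DH T X)).
  by move=> H' h1 h2; exact: IH _ h1 H' erefl h2.
have stepA : forall c (T : {set 'I_(mg_m H) * 'I_(mg_m H)}), #|offd (mg_m H) :\: T| = c -> T \subset offd (mg_m H) ->
    inS (fun X => DH T X - Inj H X).
  elim=> [|c IHc] T hc hT.
    have : offd (mg_m H) :\: T = set0 by apply: cards0_eq.
    move/eqP; rewrite setD_eq0 => hT2.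
    have -> : T = offd (mg_m H) by apply/eqP; rewrite eqEsubset hT hT2.
    by apply: inS_ext inS0 => X; rewrite /Inj subrr.
  have : offd (mg_m H) :\: T != set0 by rewrite -card_gt0 hc.
  case/set0Pn => [[u v]]; rewrite inE => /andP [hpT hp].
  have huv : u != v by move: hp; rewrite inE.
  have hc' : #|offd (mg_m H) :\: ((u, v) |: T)| = c.
    have e : offd (mg_m H) :\: ((u, v) |: T) = (offd (mg_m H) :\: T) :\ (u, v).
      apply/setP => x; rewrite !inE; case: (eqVneq x (u, v)) => //=.
    move: hc; rewrite (cardsD1 (u, v)) -e !inE hpT /=.
    by move: hp; rewrite inE => -> /= [].
  have hT' : (u, v) |: T \subset offd (mg_m H) by rewrite subUset sub1set hp hT.
  have IHp := IHc _ hc' hT'.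
  case: (boolP ((v, u) \in T)) => hvu.
    apply: inS_ext IHp => X; congr (_ - _); apply/matrixP => i k; rewrite !mxE.
    apply: eq_bigl => phi; rewrite cndU1 /=.
    case hcT: (cnd phi T); rewrite ?andbF //.
    by move/forallP: hcT => /(_ (v, u)); rewrite hvu /= eq_sym => ->.
  have hm' : (mg_m (imG (collapse huv)) < m)%N.
    have := ltn_ord u; rewrite /= -hm; lia.
  have hd' : (size (mg_E (imG (collapse huv))) <= d)%N by rewrite /= size_map.
  have [_ hD'] := IHs _ hm' hd'.
  have hsub : [set (collapse huv q.1, collapse huv q.2) | q in T]
      \subset offd (mg_m (imG (collapse huv))).
    apply/subsetP => q /imsetP [[x y] hxy ->]; rewrite inE /=.
    have nxy : x != y by have := subsetP hT _ hxy; rewrite inE.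
    apply/negP => /eqP e; have := congr1 (lift v) e; rewrite !lift_collapse.
    case: (eqVneq x v) => [hx|hx]; case: (eqVneq y v) => [hy|hy] h'.
    - by move: nxy; rewrite hx hy eqxx.
    - by move: hvu; rewrite -hx h' hxy.
    - by move: hpT; rewrite -hy -h' hxy.
    - by move: nxy; rewrite h' eqxx.
  apply: inS_ext (inSD IHp (hD' _ hsub)) => X.
  by rewrite [DH T X](DH_split huv) addrAC.
have hInj : inS (Inj H).
  case: (leqP (mg_m H) n) => hmn; last by apply: inS_ext inS0 => X; rewrite Inj_big.
  case: (boolP [exists w : 'I_(mg_m H), (w != mg_a H) && (w != mg_b H) && mg_isolated w]).
    case/existsP => w /andP [/andP [hwa hwb] hiso].
    rewrite eq_sym in hwa; rewrite eq_sym in hwb.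
    have hm' : (mg_m (imG (collapse hwa)) < m)%N.
      have := ltn_ord w; rewrite /= -hm; lia.
    have hd' : (size (mg_E (imG (collapse hwa))) <= d)%N by rewrite /= size_map.
    have [hI _] := IHs _ hm' hd'.
    apply: inS_ext (inSZ ((n - (mg_m H).-1)%:R) hI) => X.
    by rewrite (Inj_remove hwa hwb X hiso).
  rewrite negb_exists => /forallP hno.
  have hni : forall v, v != mg_a H -> v != mg_b H -> ~~ mg_isolated v.
    by move=> v h1 h2; have := hno v; rewrite h1 h2.
  have hB : inB n d H.
    split => //; rewrite leq_min hmn /=; apply: leq_trans (nodes_bound hni) _.
    by rewrite leq_add2l leq_mul2l hd orbT.
  have hA := stepA _ set0 erefl (sub0set _).
  apply: inS_ext (inSB (inS_PH hB) hA) => X.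
  by rewrite PH_DH opprB addrC subrK.
split => // T hT; apply: inS_ext (inSD (stepA _ T erefl hT) hInj) => X.
by rewrite subrK.
Qed.

Definition Gr (i0 k0 : N) (al : {ffun N * N -> nat}) : mgraph :=
  @MGraph n (flatten [seq nseq (al ij) ij | ij : N * N <- index_enum _]) i0 k0.

Lemma Gr_size i0 k0 al : size (mg_E (Gr i0 k0 al)) = mdeg al.
Proof.
rewrite /= size_flatten sumnE /shape big_map big_map /mdeg.
by apply: eq_bigr => ij _; rewrite size_nseq.
Qed.

Lemma prod_nseq (A : Type) (F : A -> R) (a : A) k :
  \prod_(e <- nseq k a) F e = F a ^+ k.
Proof. by elim: k => [|k IH]; rewrite ?big_nil ?expr0 // big_cons IH exprS. Qed.

Lemma Gr_Wt i0 k0 al X (phi : N -> N) :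
  Wt (H := Gr i0 k0 al) X phi = \prod_(ij : N * N) X (phi ij.1) (phi ij.2) ^+ al ij.
Proof.
rewrite /Wt big_flatten /= big_map; apply: eq_bigr => ij _.
by rewrite prod_nseq.
Qed.

Definition toperm (phi : {ffun N -> N}) : {perm N} := insubd (1%g : {perm N}) phi.

Lemma toperm_val (phi : {ffun N -> N}) x : injectiveb phi -> toperm phi x = phi x.
Proof. by move=> h; rewrite -pvalE /toperm insubdK. Qed.

Lemma toperm_g (g : {perm N}) : toperm [ffun x => g x] = g.
Proof.
apply/permP => x; rewrite toperm_val ?ffunE //.
by apply/injectiveP => y z; rewrite !ffunE; apply: perm_inj.
Qed.

Lemma avg_Gr i0 k0 al X (i k : N) :
  \sum_(g : {perm N} | (g i == i0) && (g k == k0)) monomial al (Sact g X) =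
  Inj (Gr i0 k0 al) X i k.
Proof.
rewrite /Inj /DH mxE.
rewrite (reindex_onto (fun g : {perm N} => [ffun x => (g^-1)%g x])
          (fun phi : {ffun N -> N} => ((toperm phi)^-1)%g)).
  apply: eq_big => [g|g _].
    rewrite /= !ffunE toperm_g invgK eqxx andbT.
    have -> : cnd [ffun x => (g^-1)%g x] (offd _).
      by rewrite cnd_offd; apply/injectiveP => y z; rewrite !ffunE; apply: perm_inj.
    by rewrite andbT !(canF_eq (permK g)) (eq_sym i) (eq_sym k).
  rewrite Gr_Wt /monomial; apply: eq_bigr => ij _; by rewrite !ffunE mxE.
move=> phi /andP [_]; rewrite cnd_offd => hinj.
apply/ffunP => x; rewrite ffunE invgK toperm_val //.
Qed.

Lemma inS_sum_in (I : eqType) (r : seq I) (F : I -> M -> M) :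
  (forall i, i \in r -> inS (F i)) -> inS (fun X => \sum_(i <- r) F i X).
Proof.
elim: r => [|i r IH] hF.
  by apply: inS_ext inS0 => X; rewrite big_nil.
apply: inS_ext (inSD (hF i (mem_head _ _)) (IH _)) => [X|j hj]; first by rewrite big_cons.
by apply: hF; rewrite in_cons hj orbT.
Qed.

Lemma pair_sum (F : {perm N} -> N -> N -> R) (i k : N) :
  \sum_(i0 : N) \sum_(k0 : N) \sum_(g : {perm N} | (g i == i0) && (g k == k0)) F g i0 k0
  = \sum_(g : {perm N}) F g (g i) (g k).
Proof.
rewrite pair_big /= (partition_big (fun g : {perm N} => (g i, g k)) predT) //=.
apply: eq_bigr => [[i0 k0]] _ /=; apply: eq_big => [g|g /andP [/eqP <- /eqP <-]] //=.

Qed.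

Lemma span_all (P : M -> M) : polymap_deg_le d P -> equivariant P -> inS P.
Proof.
move=> hP heq.
pose c : R := ((n`!)%:R)^-1.
pose Q (i0 k0 : N) (X : M) : M := \matrix_(i, k)
   (c * \sum_(g : {perm N} | (g i == i0) && (g k == k0)) P (Sact g X) i0 k0).
have decomp : forall X, \sum_(i0 : N) \sum_(k0 : N) Q i0 k0 X = P X.
  move=> X; apply/matrixP => i k; rewrite summxE.
  under eq_bigr do rewrite summxE.
  under eq_bigr do under eq_bigr do rewrite mxE.
  under eq_bigr do rewrite -mulr_sumr.
  rewrite -mulr_sumr pair_sum.
  have -> : \sum_(g : {perm N}) P (Sact g X) (g i) (g k) = \sum_(g : {perm N}) P X i k.
    by apply: eq_bigr => g _; rewrite heq mxE !permK.
  rewrite sumr_const card_Sn -mulr_natl mulrA mulVf ?mul1r //.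
  by rewrite pnatr_eq0 -lt0n fact_gt0.
apply: (@inS_ext (fun X => \sum_(i0 : N) \sum_(k0 : N) Q i0 k0 X) P decomp).
apply: inS_sum => i0; apply: inS_sum => k0.
have [s [hs hsX]] := hP i0 k0.
have hsX' : forall X, P X i0 k0 = \sum_(p <- s) p.1 * monomial p.2 X := hsX.
have hQ : forall X, \sum_(p <- s) (c * p.1) *: Inj (Gr i0 k0 p.2) X = Q i0 k0 X.
  move=> X; apply/matrixP => i k; rewrite summxE mxE.
  rewrite [in RHS](eq_bigr _ (fun g _ => hsX' (Sact g X))).
  rewrite [X in _ = c * X]exchange_big mulr_sumr; apply: eq_bigr => p _.
  by rewrite mxE -avg_Gr -mulrA mulr_sumr.
apply: (@inS_ext (fun X => \sum_(p <- s) (c * p.1) *: Inj (Gr i0 k0 p.2) X) _ hQ).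
apply: inS_sum_in => p hp; apply: inSZ.
have hd : (size (mg_E (Gr i0 k0 p.2)) <= d)%N by rewrite Gr_size; exact: (allP hs p hp).
by have [] := main_ind erefl hd.
Qed.

End Span.

End Part3.

Import Order.TTheory GRing.Theory Num.Theory.
Local Open Scope ring_scope.

Theorem theorem1 (R : realType) (n d : nat) (hn : (1 <= n)%N) :
  (* each P_H, H in B_{n,d}, lies in the space *)
  (forall H : mgraph, inB n d H ->
     polymap_deg_le d (@PH R n H) /\ equivariant (@PH R n H))
  /\
  (* linear independence over pairwise non-isomorphic members of B_{n,d} *)
  (forall (k : nat) (Hs : 'I_k -> mgraph) (c : 'I_k -> R),
     (forall i, inB n d (Hs i)) ->
     (forall i j, i != j -> ~ mg_iso (Hs i) (Hs j)) ->
     (forall X : 'M[R]_n, \sum_(i < k) c i *: PH (Hs i) X = 0) ->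
     forall i, c i = 0)
  /\
  (* spanning *)
  (forall P : 'M[R]_n -> 'M[R]_n,
     polymap_deg_le d P -> equivariant P ->
     exists (k : nat) (Hs : 'I_k -> mgraph) (c : 'I_k -> R),
       (forall i, inB n d (Hs i)) /\
       forall X : 'M[R]_n, P X = \sum_(i < k) c i *: PH (Hs i) X).
Proof.
Proof.
split.
  move=> H hB; split; last exact: Part1.PH_equiv.
  by apply: Part1.PH_poly; case: hB.
split.
  exact: Part2.indep.
move=> P hP heq.
exact: (Part3.span_all hP heq).
Qed.
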